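(* Let $n,m\ge 5$ be integers with $m\equiv 0\pmod 4$ and $n\equiv 1\pmod 4$. Then $\gamma_p(C_n\times C_m)\le\frac{(n+1)m}{4}$.
   Context: All graphs are finite, simple and undirected. $C_n$ denotes the cycle of order $n$ and $G\times H$ the Cartesian product of graphs. For a graph $G$ without isolated vertices, a set $D\subseteq V(G)$ is a paired dominating set if every vertex outside $D$ has a neighbour in $D$ and the induced subgraph $G[D]$ has a perfect matching; $\gamma_p(G)$ is the minimum size of a paired dominating set. *)

(* Defs.v *)
From mathcomp Require Import all_boot.
Set Implicit Arguments. Unset Strict Implicit. Unset Printing Implicit Defensive.

(* Cycle C_n on vertices 'I_n: i ~ j iff j = i+1 or i = j+1 (mod n).
   For n >= 3 this is the simple cycle of order n. *)
Definition cycle_adj (n : nat) : rel 'I_n :=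
  fun i j => (i != j) && ((j == (i.+1 %% n) :> nat) || (i == (j.+1 %% n) :> nat)).
Arguments cycle_adj : clear implicits.

Definition cart_adj (T U : finType) (g : rel T) (h : rel U) : rel (T * U) :=
  fun x y => ((x.1 == y.1) && h x.2 y.2) || ((x.2 == y.2) && g x.1 y.1).

Definition dominating (T : finType) (g : rel T) (D : {set T}) : Prop :=
  forall v, v \notin D -> exists2 u, u \in D & g v u.

Definition has_perfect_matching (T : finType) (g : rel T) (D : {set T}) : Prop :=
  exists f : T -> T, forall v, v \in D ->
    [/\ f v \in D, f v != v, f (f v) = v & g v (f v)].

Definition paired_dominating (T : finType) (g : rel T) (D : {set T}) : Prop :=
  dominating g D /\ has_perfect_matching g D.

Definition is_gamma_p (T : finType) (g : rel T) (k : nat) : Prop :=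
  (exists D : {set T}, paired_dominating g D /\ #|D| = k) /\
  (forall D : {set T}, paired_dominating g D -> k <= #|D|).

(* Main.v *)
Require Import Defs.
From mathcomp Require Import all_boot.
From mathcomp Require Import zify.
From Stdlib Require Import Classical.

Lemma min_ex (P : nat -> Prop) k0 : P k0 -> exists k, P k /\ forall j, P j -> k <= j.
Proof.
move=> Pk0; apply: NNPP => H.
have H2 : forall k j, j <= k -> ~ P j.
  elim=> [|k IH] j hj Pj.
    apply: H; exists j; split=> // i _; lia.
  apply: H; exists j; split=> // i Pi; rewrite leqNgt; apply/negP=> lt.
  by apply: (IH i) => //; lia.
exact: (H2 k0 k0 (leqnn _) Pk0).
Qed.

Lemma sum_row (b : bool) r : \sum_(j < 4 * r) ((j %% 4 < 2) == b : nat) = 2 * r.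
Proof.
rewrite -(big_mkord xpredT (fun j => ((j %% 4 < 2) == b : nat))).
elim: r => [|r IH]; first by rewrite big_geq.
rewrite (big_cat_nat _ (n := 4 * r)) //=; last lia.
rewrite IH.
have -> : 4 * r.+1 = (4 * r).+4 by lia.
rewrite !big_nat_recr //=; try lia.
rewrite (big_geq (leqnn (4 * r))).
by case: b IH => /= IH; lia.
Qed.

Lemma sum_col q (F : nat -> nat) c : (forall i, F i = if odd i then 0 else c) ->
  \sum_(i < (4 * q).+1) F i = (2 * q + 1) * c.
Proof.
move=> hF.
rewrite -(big_mkord xpredT F).
elim: q => [|q IH]; first by rewrite big_nat1 hF /=; lia.
rewrite (big_cat_nat _ (n := (4 * q).+1)) //=; last lia.
rewrite IH.
have -> : (4 * q.+1).+1 = (4 * q).+1.+4 by lia.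
do 4 (rewrite big_nat_recr /=; last lia).
rewrite big_geq // !hF.
have -> : odd (4 * q).+1 by rewrite /= oddM.
have -> : odd (4 * q).+2 = false by rewrite /= oddM.
have -> : odd (4 * q).+3 by rewrite /= oddM.
have -> : odd (4 * q).+4 = false by rewrite /= oddM.
rewrite /=; lia.
Qed.

Lemma flipR {a b c : bool} : ~~ (a == b) -> c = ~~ b -> a == c.
Proof. by case: a; case: b; case: c. Qed.
Lemma flipL {a b c : bool} : (a == b) = false -> c = ~~ a -> c == b.
Proof. by case: a; case: b; case: c. Qed.
Ltac fl := match goal with |- (?x < 2) = ~~ (?y < 2) => case: (ltnP x 2); case: (ltnP y 2) => //= *; exfalso; lia end.
Ltac fl2 := match goal with |- (?x < 2) = (?y < 2) => case: (ltnP x 2); case: (ltnP y 2) => //= *; exfalso; lia end.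
Ltac fe := match goal with |- (?x == 0) = ~~ (?y == 0) => case: (eqP : reflect (x = 0) (x == 0)); case: (eqP : reflect (y = 0) (y == 0)) => //= *; exfalso; lia end.

Theorem theorem5p2 (n m : nat) :
  5 <= n -> 5 <= m -> m %% 4 = 0 -> n %% 4 = 1 ->
  exists k, is_gamma_p (cart_adj (cycle_adj n) (cycle_adj m)) k /\
            4 * k <= (n + 1) * m.
Proof.
move=> hn hm hm4 hn4.
set g := cart_adj (cycle_adj n) (cycle_adj m).
set D := [set x : 'I_n * 'I_m | ~~ odd x.1 && ((x.1 %% 4 == 0) == (x.2 %% 4 < 2))].
have PD : paired_dominating g D.
  split.
  move=> [i j]; rewrite inE /= => hv.
  have hin := ltn_ord i; have hjm := ltn_ord j.
  case hi: (odd i).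
  - have hi1 : i.+1 < n by lia.
    have hi0 : i.-1 < n by lia.
    case hb: ((i.-1 %% 4 == 0) == (j %% 4 < 2)).
    + exists (Ordinal hi0, j).
        rewrite inE /= hb andbT; lia.
      rewrite /g /cart_adj /= eqxx /=; apply/orP; right; rewrite /cycle_adj /=; apply/andP; split.
        apply/eqP => /(congr1 val) /=; lia.
      apply/orP; right; rewrite prednK ?modn_small //; lia.
    + exists (Ordinal hi1, j).
        rewrite inE /=; apply/andP; split; first lia.
        apply: (flipL hb); fe.
      rewrite /g /cart_adj /= eqxx /=; apply/orP; right; rewrite /cycle_adj /=; apply/andP; split.
        apply/eqP => /(congr1 val) /=; lia.
      apply/orP; left; rewrite modn_small //.
  - rewrite hi /= in hv.
    case hj: (odd j).
    + case hjm1: (j.+1 < m).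
      * exists (i, Ordinal hjm1).
          rewrite inE /= hi /=; apply: (flipR hv); fl.
        rewrite /g /cart_adj /= eqxx /= /cycle_adj /=; apply/orP; left; apply/andP; split.
          apply/eqP => /(congr1 val) /=; lia.
        apply/orP; left; rewrite modn_small //.
      * have hm0 : 0 < m by lia.
        exists (i, Ordinal hm0).
          rewrite inE /= hi /=; apply: (flipR hv); fl.
        rewrite /g /cart_adj /= eqxx /= /cycle_adj /=; apply/orP; left; apply/andP; split.
          apply/eqP => /(congr1 val) /=; lia.
        apply/orP; left; have -> : j.+1 = m by lia. by rewrite modnn.
    + case hj0: (j == 0 :> nat).
      * have hm1 : m.-1 < m by lia.
        exists (i, Ordinal hm1).
          rewrite inE /= hi /=; apply: (flipR hv); fl.
        rewrite /g /cart_adj /= eqxx /= /cycle_adj /=; apply/orP; left; apply/andP; split.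
          apply/eqP => /(congr1 val) /=; lia.
        apply/orP; right; rewrite prednK; last lia. by rewrite modnn (eqP hj0).
      * have hj1 : j.-1 < m by lia.
        exists (i, Ordinal hj1).
          rewrite inE /= hi /=; apply: (flipR hv); fl.
        rewrite /g /cart_adj /= eqxx /= /cycle_adj /=; apply/orP; left; apply/andP; split.
          apply/eqP => /(congr1 val) /=; lia.
        apply/orP; right; rewrite prednK ?modn_small //; lia.
  exists (fun v : 'I_n * 'I_m => (v.1, insubd v.2 (if odd v.2 then v.2.-1 else v.2.+1))).
  move=> [i j]; rewrite inE /= => /andP [hi hij].
  have hjm := ltn_ord j.
  have hj' : (if odd j then j.-1 else j.+1) < m by case: ifP; lia.
  have vj : val (insubd j (if odd j then j.-1 else j.+1)) = (if odd j then j.-1 else j.+1).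
    by rewrite val_insubd hj'.
  split.
  - rewrite inE /= hi /= vj.
    have -> : ((if odd j then j.-1 else j.+1) %% 4 < 2) = (j %% 4 < 2).
      case: ifP => oj; fl2.
    exact: hij.
  - apply/eqP=> h; have := congr1 (fun x => val x.2) h; rewrite /= vj; case: ifP; lia.
  - congr (_, _); apply: val_inj; rewrite /= val_insubd vj.
    case oj: (odd j) hj' => hj'.
      have -> : odd j.-1 = false by lia.
      rewrite /= ifT; lia.
    have -> : odd j.+1 by lia.
    rewrite /= ifT; lia.
  - rewrite /g /cart_adj /= eqxx /= /cycle_adj /=; apply/orP; left; apply/andP; split.
      apply/eqP => /(congr1 val); rewrite /= vj; case: ifP; lia.
    rewrite vj; case: ifP => oj.
      apply/orP; right; rewrite prednK ?modn_small //; lia.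
    apply/orP; left; rewrite modn_small //; move: hj'; by rewrite oj.
have cD : 4 * #|D| <= (n + 1) * m.
  have -> : #|D| = \sum_(i < n) \sum_(j < m) (~~ odd i && ((i %% 4 == 0) == (j %% 4 < 2)) : nat).
    rewrite pair_big /= -sum1_card big_mkcond /=; apply: eq_bigr => x _; rewrite inE; by case: ifP.
  have [q hq] : exists q, n = (4*q).+1 by exists (n %/ 4); lia.
  have [r hr] : exists r, m = 4*r by exists (m %/ 4); lia.
  rewrite hq hr (@sum_col q (fun i => \sum_(j < 4 * r) (~~ odd i && ((i %% 4 == 0) == (j %% 4 < 2)) : nat)) (2 * r)); first lia.
  move=> i; case: (odd i) => /=; first by rewrite big1.
  rewrite -(sum_row (i %% 4 == 0) r); apply: eq_bigr => j _; by rewrite eq_sym.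
have [k [Pk kmin]] := @min_ex (fun k => exists D, paired_dominating g D /\ #|D| = k) _
   (ex_intro _ D (conj PD erefl)).
exists k; split.
  split=> // D' PD'; apply: kmin; by exists D'.
apply: leq_trans cD; rewrite leq_mul2l /=; apply: kmin; by exists D.
Qed.
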